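(* Fix $x\in\mathbf{X}$ and temperatures $\tau_1,\dots,\tau_T>0$. (i) Suppose $H_{TP}(x)\le\delta$, and define OOD detectors by $\mathbf{P}'_k(x\in\mathbf{X}_k\mid D)=\mathbf{P}(x\in\mathbf{X}_k\mid D)^{1/\tau_k}$. Then for all $k=1,\dots,T$, $H_{OOD,k}(x)\le\max\big(\delta/\tau_k,\ -\log(1-(1-e^{-\delta})^{1/\tau_k})\big)$. (ii) Suppose OOD detectors satisfy $H_{OOD,k}(x)\le\delta_k$ for $k=1,\dots,T$, and define $\mathbf{P}(x\in\mathbf{X}_k\mid D)=\frac{\mathbf{P}'_k(x\in\mathbf{X}_k\mid D)^{1/\tau_k}}{\sum_j\mathbf{P}'_j(x\in\mathbf{X}_j\mid D)^{1/\tau_j}}$. Then $$H_{TP}(x)\le\sum_k\frac{\mathbf{1}_{x\in\mathbf{X}_k}\delta_k}{\tau_k}+\frac{\sum_k(1-e^{-\delta_k})^{1/\tau_k}}{\sum_k\mathbf{1}_{x\in\mathbf{X}_k}\big(1-(1-e^{-\delta_k})^{1/\tau_k}\big)},$$ where $\mathbf{1}_{x\in\mathbf{X}_k}$ is the indicator of $x\in\mathbf{X}_k$.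
   Context: $\mathbf{X}$ is an input domain which is the disjoint union of task domains $\mathbf{X}_1,\dots,\mathbf{X}_T$. $D$ is a fixed conditioning event. A task-id prediction (TP) is a categorical distribution $\{\mathbf{P}(x\in\mathbf{X}_k\mid D)\}_{k=1}^T$ over the tasks (nonnegative, summing to $1$); for $x\in\mathbf{X}_{k_0}$, $H_{TP}(x)=-\log\mathbf{P}(x\in\mathbf{X}_{k_0}\mid D)$. An OOD detector for task $k$ is a value $\mathbf{P}'_k(x\in\mathbf{X}_k\mid D)\in[0,1]$ with $\mathbf{P}'_k(x\notin\mathbf{X}_k\mid D)=1-\mathbf{P}'_k(x\in\mathbf{X}_k\mid D)$, and $H_{OOD,k}(x)=-\log\mathbf{P}'_k(x\in\mathbf{X}_k\mid D)$ if $x\in\mathbf{X}_k$, $H_{OOD,k}(x)=-\log\mathbf{P}'_k(x\notin\mathbf{X}_k\mid D)$ if $x\in\mathbf{X}\setminus\mathbf{X}_k$. *)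

(* Defs.v *)
From HB Require Import structures.
From mathcomp Require Import all_boot all_order all_algebra.
From mathcomp Require Import all_classical all_reals all_analysis.
Set Implicit Arguments. Unset Strict Implicit. Unset Printing Implicit Defensive.
Import Order.TTheory GRing.Theory Num.Theory.
Local Open Scope ring_scope.

Section Defs.
Variable R : realType.

Definition neglog (p : R) : \bar R :=
  if p == 0 then +oo%E else (- ln p)%:E.

Definition is_TP (T : nat) (p : 'I_T -> R) : Prop :=
  (forall k, 0 <= p k) /\ \sum_(k < T) p k = 1.

Definition is_OOD (T : nat) (q : 'I_T -> R) : Prop :=
  forall k, 0 <= q k <= 1.

(* The domain X is the disjoint union of X_1..X_T, encoded by the map
   [task : X -> 'I_T] sending each point to the unique task containing it;
   x \in X_k  <->  task x == k. *)

Definition H_TP (X : Type) (T : nat) (task : X -> 'I_T) (p : 'I_T -> R) (x : X)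
  : \bar R := neglog (p (task x)).

Definition H_OOD (X : Type) (T : nat) (task : X -> 'I_T) (q : 'I_T -> R)
  (k : 'I_T) (x : X) : \bar R :=
  if task x == k then neglog (q k) else neglog (1 - q k).

End Defs.

(* Main.v *)
Require Import Defs.
From HB Require Import structures.
From mathcomp Require Import all_boot all_order all_algebra.
From mathcomp Require Import all_classical all_reals all_analysis.
From mathcomp Require Import lra.
Import Order.TTheory GRing.Theory Num.Theory.
Local Open Scope ring_scope.

Section H.
Variable R : realType.

Lemma neglog_leE (p r : R) : 0 <= p ->
  (neglog p <= r%:E)%E -> 0 < p /\ - ln p <= r.
Proof.
move=> p0; rewrite /neglog; case: ifPn => [_|pn0]; first by [].
by rewrite lee_fin => h; split => //; rewrite lt_neqAle eq_sym pn0.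
Qed.

Lemma neglog_leI (p r : R) : 0 < p -> - ln p <= r -> (neglog p <= r%:E)%E.
Proof. by move=> p0 h; rewrite /neglog gt_eqF // lee_fin. Qed.

Lemma expN_le (p r : R) : 0 < p -> - ln p <= r -> expR (- r) <= p.
Proof.
move=> p0 h; rewrite -[X in _ <= X](lnK p0) ler_expR; by rewrite lerNl.
Qed.

Lemma powR_lt1 (a s : R) : 0 <= a < 1 -> 0 < s -> a `^ s < 1.
Proof.
move=> /andP[a0 a1] s0.
have := @gt0_ltr_powR R s s0 a 1 a0 ler01 a1.
by rewrite powR1.
Qed.

Lemma ln_le_sub1 (x : R) : 0 < x -> ln x <= x - 1.
Proof.
move=> x0; have := expR_ge1Dx (ln x); rewrite lnK // => h.
by rewrite lerBrDl.
Qed.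

Lemma sum_ind (T : nat) (k0 : 'I_T) (f : 'I_T -> R) :
  \sum_(k < T) (k0 == k)%:R * f k = f k0.
Proof.
rewrite (bigD1 k0) //= eqxx mul1r big1 ?addr0 // => k /negbTE.
by rewrite eq_sym => ->; rewrite mul0r.
Qed.

Lemma sum_ind2 (T : nat) (k0 : 'I_T) (f g : 'I_T -> R) :
  \sum_(k < T) (k0 == k)%:R * f k / g k = f k0 / g k0.
Proof.
rewrite (bigD1 k0) //= eqxx mul1r big1 ?addr0 // => k /negbTE.
by rewrite eq_sym => ->; rewrite !mul0r.
Qed.

End H.
Arguments neglog_leE {R p r}.
Arguments neglog_leI {R p r}.
Arguments expN_le {R p r}.
Arguments powR_lt1 {R a s}.
Arguments ln_le_sub1 {R x}.

Theorem theorem5 (R : realType) (X : Type) (T : nat) (task : X -> 'I_T)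
    (x : X) (tau : 'I_T -> R) (htau : forall k, 0 < tau k) :
  (* (i) *)
  (forall (p : 'I_T -> R) (delta : R),
     is_TP p ->
     (H_TP task p x <= delta%:E)%E ->
     forall k : 'I_T,
       (H_OOD task (fun j => (p j `^ (tau j)^-1)%R) k x <=
        Order.max (delta / tau k)%:E
                  (neglog (1 - (1 - expR (- delta)) `^ (tau k)^-1)%R))%E)
  /\
  (* (ii) *)
  (forall (q : 'I_T -> R) (delta : 'I_T -> R),
     is_OOD q ->
     (forall k, (H_OOD task q k x <= (delta k)%:E)%E) ->
     (H_TP task
        (fun k => (q k `^ (tau k)^-1 / \sum_(j < T) q j `^ (tau j)^-1)%R) x <=
      (\sum_(k < T) (task x == k)%:R * delta k / tau k
       + (\sum_(k < T) (1 - expR (- delta k)) `^ (tau k)^-1)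
         / (\sum_(k < T) (task x == k)%:R
              * (1 - (1 - expR (- delta k)) `^ (tau k)^-1)))%:E)%E).
Proof.
set k0 := task x.
have sgt0 : forall k, 0 < (tau k)^-1 by move=> k; rewrite invr_gt0.
split.
- move=> p delta [p0 p1] hTP k.
  move: hTP; rewrite /H_TP -/k0 => /(neglog_leE (p0 k0)) [pk0 hl].
  have ed : expR (- delta) <= p k0 by exact: expN_le.
  rewrite /H_OOD -/k0; case: eqP => [<-|/eqP nk].
    rewrite le_max; apply/orP; left; apply: neglog_leI; first exact: powR_gt0.
    rewrite ln_powR mulrC -mulNr ler_wpM2r //; exact: ltW.
  have pk : p k <= 1 - expR (- delta).
    apply: (le_trans _ (lerB (lexx 1) ed)); rewrite -p1 (bigD1 k0) //=.
    rewrite (bigD1 k) /=; last by rewrite eq_sym.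
    rewrite [p k0 + _]addrC addrK lerDl; apply: sumr_ge0 => i _; exact: p0.
  have b0 : 0 <= 1 - expR (- delta) by exact: le_trans (p0 k) pk.
  have c1 : (1 - expR (- delta)) `^ (tau k)^-1 < 1.
    apply: powR_lt1 => //; rewrite b0 /= ltrBlDr ltrDl; exact: expR_gt0.
  have pc : p k `^ (tau k)^-1 <= (1 - expR (- delta)) `^ (tau k)^-1.
    by apply: ge0_ler_powR; rewrite ?nnegrE ?(ltW (sgt0 k)) ?p0.
  have D0 : 0 < 1 - (1 - expR (- delta)) `^ (tau k)^-1 by rewrite subr_gt0.
  rewrite le_max; apply/orP; right.
  rewrite [X in (_ <= X)%E]/neglog gt_eqF //.
  apply: neglog_leI; first exact: (lt_le_trans D0 (lerB (lexx 1) pc)).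
  rewrite lerN2 ler_ln ?posrE //; first exact: lerB.
  exact: (lt_le_trans D0 (lerB (lexx 1) pc)).
- move=> q delta hq hO.
  have q0 : forall k, 0 <= q k by move=> k; case/andP: (hq k).
  have q1 : forall k, q k <= 1 by move=> k; case/andP: (hq k).
  have := hO k0; rewrite /H_OOD eqxx => /(neglog_leE (q0 k0)) [qk0 hl0].
  have oth : forall j, j != k0 -> q j <= 1 - expR (- delta j).
    move=> j nj; have := hO j; rewrite /H_OOD -/k0 eq_sym (negbTE nj).
    move=> /(neglog_leE _) []; first by rewrite subr_ge0.
    move=> h1 h2; have := expN_le h1 h2; move: (q0 j); lra.
  rewrite sum_ind2 sum_ind.
  set a := q k0 `^ (tau k0)^-1.
  set S := \sum_(j < T) q j `^ (tau j)^-1.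
  set Sig := \sum_(k < T) (1 - expR (- delta k)) `^ (tau k)^-1.
  have a0 : 0 < a by exact: powR_gt0.
  have a1 : a <= 1.
    have -> : (1:R) = 1 `^ (tau k0)^-1 by rewrite powR1.
    by rewrite /a; apply: ge0_ler_powR; rewrite ?nnegrE ?(ltW (sgt0 k0)) ?q0 ?q1.
  have Srest : S = a + \sum_(j < T | j != k0) q j `^ (tau j)^-1.
    by rewrite /S (bigD1 k0).
  have rest_le : \sum_(j < T | j != k0) q j `^ (tau j)^-1 <= Sig.
    rewrite /Sig [X in _ <= X](bigD1 k0) //= -[X in X <= _]add0r.
    apply: lerD; first exact: powR_ge0.
    apply: ler_sum => j nj; apply: ge0_ler_powR => //; first exact: ltW.
      by rewrite nnegrE.
    by rewrite nnegrE; apply: le_trans (q0 j) (oth j nj).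
    exact: oth.
  have rest0 : 0 <= \sum_(j < T | j != k0) q j `^ (tau j)^-1.
    by apply: sumr_ge0 => j _; exact: powR_ge0.
  have S0 : 0 < S by rewrite Srest; apply: (lt_le_trans a0); rewrite lerDl.
  have d0 : 0 <= delta k0.
    by apply: le_trans hl0; rewrite oppr_ge0; apply: ln_le0.
  have b0 : 0 <= 1 - expR (- delta k0).
    by rewrite subr_ge0 expR_le1 oppr_le0.
  have c1 : (1 - expR (- delta k0)) `^ (tau k0)^-1 < 1.
    apply: powR_lt1 => //; rewrite b0 /= ltrBlDr ltrDl; exact: expR_gt0.
  have D0 : 0 < 1 - (1 - expR (- delta k0)) `^ (tau k0)^-1 by rewrite subr_gt0.
  have D1 : 1 - (1 - expR (- delta k0)) `^ (tau k0)^-1 <= 1.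
    by rewrite lerBlDr lerDl powR_ge0.
  have Sig0 : 0 <= Sig by apply: sumr_ge0 => j _; exact: powR_ge0.
  have SigD : Sig <= Sig / (1 - (1 - expR (- delta k0)) `^ (tau k0)^-1).
    by rewrite ler_pdivlMr // ler_piMr.
  rewrite /H_TP -/k0; apply: neglog_leI; first exact: divr_gt0.
  rewrite ln_div ?posrE // opprB addrC.
  apply: lerD.
    rewrite /a ln_powR mulrC -mulNr ler_wpM2r //; exact: ltW.
  apply: le_trans (ln_le_sub1 S0) _; apply: le_trans SigD.
  apply: le_trans rest_le; rewrite Srest lerBlDr addrC lerD2l //.
Qed.
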